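(* Let $(Q,F)$ be a finite ice quiver with $Q_0=\{1,\dots,m\}$, $F_0=\{n+1,\dots,m\}$ and Euler matrix $\widehat B=(b_{ij})$, and let $1\le v\le n$ be an unfrozen vertex not incident to loops or $2$-cycles. Let $E_v=(e_{ij})$ be the $m\times m$ matrix with $e_{ij}=\delta_{ij}$ for $j\ne v$, $e_{iv}=[b_{iv}]_+$ for $i\neq v$, and $e_{vv}=-1$. Then the Euler matrix of the extended Fomin–Zelevinsky mutation $\mu^{\mathrm{FZ}}_v(Q,F)$ equals $E_v\widehat BE_v^T$.
   Context: $[x]_+=\max\{x,0\}$. The Euler matrix of a finite ice quiver $(Q,F)$ (with $F$ the frozen subquiver): $b_{ii}=0$ for $i\le n$, $b_{ii}=1$ for $i>n$, and $b_{ij}=\#\{\text{unfrozen arrows } i\to j\}-\#\{\text{arrows } j\to i\}$ for $i\neq j$. Extended Fomin–Zelevinsky mutation $\mu^{\mathrm{FZ}}_v(Q,F)$: (1) for each pair of arrows $\alpha:u\to v$, $\beta:v\to w$ add an unfrozen arrow $u\to w$; (2) reverse all arrows incident to $v$; (3) remove a maximal collection of $2$-cycles consisting of unfrozen arrows; (4) replace each $2$-cycle in a maximal collection of $2$-cycles with exactly one frozen arrow by a frozen arrow pointing in the direction of the unfrozen arrow of that $2$-cycle. *)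

(* Defs.v *)
From HB Require Import structures.
From mathcomp Require Import all_boot all_order all_algebra.
Set Implicit Arguments. Unset Strict Implicit. Unset Printing Implicit Defensive.
Import Order.TTheory GRing.Theory Num.Theory.
Local Open Scope ring_scope.

(* A finite ice quiver on the vertex set 'I_m (vertex i : 'I_m is the paper's
   vertex i+1), given up to isomorphism by its arrow multiplicities:
   [uarr Q i j] = number of unfrozen arrows i -> j,
   [farr Q i j] = number of frozen arrows (arrows of F) i -> j. *)
Record iceq (m : nat) := IceQ {
  uarr : 'I_m -> 'I_m -> nat;
  farr : 'I_m -> 'I_m -> nat }.

(* F is a subquiver with vertex set F_0 = {n+1,...,m}, i.e. the vertices
   i : 'I_m with n <= i : frozen arrows have both endpoints in F_0. *)
Definition frozen_ok (m n : nat) (Q : iceq m) : Prop :=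
  forall i j : 'I_m, (0 < farr Q i j)%N -> (n <= i)%N /\ (n <= j)%N.

Definition euler (m n : nat) (Q : iceq m) : 'M[int]_m :=
  \matrix_(i, j)
    (if i == j then ((n <= i)%N)%:Z
     else (uarr Q i j)%:Z - (uarr Q j i)%:Z - (farr Q j i)%:Z).

Definition pos_part (x : int) : int := Num.max x 0.

Definition Emat (m n : nat) (Q : iceq m) (v : 'I_m) : 'M[int]_m :=
  \matrix_(i, j)
    (if j == v then (if i == v then -1 else pos_part (euler n Q i v))
     else (i == j)%:Z).

(* (1) for each pair alpha : i -> v, beta : v -> j add an unfrozen arrow i -> j
   (arrows incident to the unfrozen vertex v are unfrozen). *)
Definition mut_step1 m (v : 'I_m) (Q : iceq m) : iceq m :=
  IceQ (fun i j => (uarr Q i j + uarr Q i v * uarr Q v j)%N) (farr Q).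
Definition mut_step2 m (v : 'I_m) (Q : iceq m) : iceq m :=
  IceQ (fun i j => if (i == v) || (j == v) then uarr Q j i else uarr Q i j)
       (fun i j => if (i == v) || (j == v) then farr Q j i else farr Q i j).
(* (3) remove a maximal collection of 2-cycles of unfrozen arrows. *)
Definition mut_step3 m (Q : iceq m) : iceq m :=
  IceQ (fun i j => if i == j then uarr Q i j
                   else (uarr Q i j - minn (uarr Q i j) (uarr Q j i))%N)
       (farr Q).
(* (4) number of 2-cycles (frozen i -> j, unfrozen j -> i) in a maximal
   collection of 2-cycles with exactly one frozen arrow; each is replaced by a
   frozen arrow j -> i. *)
Definition mut_pairs m (Q : iceq m) (i j : 'I_m) : nat :=
  if i == j then 0%N else minn (farr Q i j) (uarr Q j i).
Definition mut_step4 m (Q : iceq m) : iceq m :=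
  IceQ (fun i j => (uarr Q i j - mut_pairs Q j i)%N)
       (fun i j => (farr Q i j - mut_pairs Q i j + mut_pairs Q j i)%N).

Definition muFZ m (v : 'I_m) (Q : iceq m) : iceq m :=
  mut_step4 (mut_step3 (mut_step2 v (mut_step1 v Q))).

(* Main.v *)
Require Import Defs.
From HB Require Import structures.
From mathcomp Require Import all_boot all_order all_algebra zify ring.
Import GRing.Theory Num.Theory.
Local Open Scope ring_scope.

Lemma pp (a b : nat) : (a = 0 \/ b = 0)%N -> pos_part (a%:Z - b%:Z) = a%:Z.
Proof. rewrite /pos_part; case=> ->; lia. Qed.

Lemma step34 m n (Q : iceq m) i j : i != j ->
  euler n (mut_step4 (mut_step3 Q)) i j =
  (uarr Q i j)%:Z - (uarr Q j i)%:Z - (farr Q j i)%:Z.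
Proof.
move=> ij; rewrite !mxE (negbTE ij) /= /mut_pairs (negbTE ij) eq_sym (negbTE ij).
rewrite /= (negbTE ij) eq_sym (negbTE ij). lia.
Qed.

Lemma rowE m n (Q : iceq m) v (x : 'I_m -> int) i :
  \sum_k Emat n Q v i k * x k =
  if i == v then - x v else x i + pos_part (euler n Q i v) * x v.
Proof.
rewrite (bigD1 v) //= mxE eqxx.
have -> : \sum_(k < m | k != v) Emat n Q v i k * x k =
          \sum_(k < m | k != v) (i == k)%:Z * x k.
  by apply: eq_bigr => k kv; rewrite mxE (negbTE kv).
case: eqP => [->|/eqP iv].
  rewrite big1 ?addr0 ?mulN1r // => k kv; by rewrite eq_sym (negbTE kv) mul0r.
rewrite (bigD1 i) //= eqxx mul1r big1 ?addr0 1?addrC // => k /andP[_ ki].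
by rewrite eq_sym (negbTE ki) mul0r.
Qed.

Theorem lemma4p2 (m n : nat) (Q : iceq m) (v : 'I_m) :
  (n <= m)%N -> frozen_ok n Q ->
  (v < n)%N ->
  (* v is not incident to loops *)
  uarr Q v v = 0%N -> farr Q v v = 0%N ->
  (* v is not incident to 2-cycles *)
  (forall i : 'I_m, i != v ->
     (uarr Q i v + farr Q i v = 0)%N \/ (uarr Q v i + farr Q v i = 0)%N) ->
  euler n (muFZ v Q) = Emat n Q v *m euler n Q *m (Emat n Q v)^T.
Proof.
move=> _ Hf vn uvv fvv H2.
have fv1 k : farr Q k v = 0%N.
  case: (posnP (farr Q k v)) => // /Hf [_]; lia.
have fv2 k : farr Q v k = 0%N.
  case: (posnP (farr Q v k)) => // /Hf []; lia.
have Bv k : k != v -> euler n Q k v = (uarr Q k v)%:Z - (uarr Q v k)%:Z.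
  by move=> kv; rewrite mxE (negbTE kv) fv2 subr0.
have Bv' k : k != v -> euler n Q v k = (uarr Q v k)%:Z - (uarr Q k v)%:Z.
  by move=> kv; rewrite mxE eq_sym (negbTE kv) fv1 subr0.
have Bvv : euler n Q v v = 0 by rewrite mxE eqxx; case: leqP vn.
have C k : k != v -> pos_part (euler n Q k v) = (uarr Q k v)%:Z.
  move=> kv; rewrite Bv // pp //; case: (H2 k kv); lia.
apply/matrixP => i j.
have EB k : (Emat n Q v *m euler n Q) i k =
   if i == v then - euler n Q v k else euler n Q i k + pos_part (euler n Q i v) * euler n Q v k.
  by rewrite mxE rowE.
rewrite [RHS]mxE.
have TT k : (Emat n Q v)^T k j = Emat n Q v j k by rewrite mxE.
under eq_bigr => k _ do rewrite TT mulrC.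
rewrite rowE !EB.
case: (eqVneq i j) => [<-|ij].
  rewrite mxE eqxx.
  case: (eqVneq i v) => [->|iv]; first by rewrite Bvv; case: leqP vn.
  rewrite C // Bv // Bv' // Bvv; rewrite [euler n Q i i]mxE eqxx; ring.
rewrite /muFZ step34 //=.
move: ij; case: (eqVneq i v) => [->|iv]; case: (eqVneq j v) => [->|jv] ij.
- by rewrite /= uvv fvv Bvv.
- rewrite /= Bvv Bv' // fv2 uvv; lia.
- rewrite /= C // Bvv Bv // ?fv1 ?fv2 ?uvv; lia.
- rewrite /= !C // Bvv !Bv // !Bv' // ?uvv.
  rewrite [euler n Q i j]mxE (negbTE ij).
  have := H2 i iv; have := H2 j jv; nia.
Qed.
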